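(* For all integers $n,m\ge 3$, $\gamma_t(C_n\times C_m)\le\gamma_t(C_{n+1}\times C_m)$ and $\gamma_p(C_n\times C_m)\le\gamma_p(C_{n+1}\times C_m)$.
   Context: All graphs are finite, simple and undirected. $C_n$ denotes the cycle of order $n$ and $G\times H$ the Cartesian product of graphs. For a graph $G$ without isolated vertices: a set $D\subseteq V(G)$ is a total dominating set if every vertex of $G$ (including those in $D$) has a neighbour in $D$; $\gamma_t(G)$ is the minimum size of a total dominating set. A set $D\subseteq V(G)$ is a paired dominating set if every vertex outside $D$ has a neighbour in $D$ and the induced subgraph $G[D]$ has a perfect matching; $\gamma_p(G)$ is the minimum size of a paired dominating set. *)

(* Defs.v *)
From mathcomp Require Import all_boot.
Set Implicit Arguments. Unset Strict Implicit. Unset Printing Implicit Defensive.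

(* Cycle C_n on vertices 'I_n: i ~ j iff i <> j and j = i+1 mod n or i = j+1 mod n.
   For n >= 3 this is the usual simple cycle. *)
Definition cycle_adj (n : nat) : rel 'I_n :=
  fun i j => (i != j) && ((j == (i.+1 %% n) :> nat) || (i == (j.+1 %% n) :> nat)).

Definition cart_adj (T1 T2 : finType) (e1 : rel T1) (e2 : rel T2) : rel (T1 * T2) :=
  fun x y => ((x.1 == y.1) && e2 x.2 y.2) || ((x.2 == y.2) && e1 x.1 y.1).

Definition torus_adj (n m : nat) : rel ('I_n * 'I_m) :=
  cart_adj (@cycle_adj n) (@cycle_adj m).
Arguments torus_adj : clear implicits.

Section Dom.
Variables (T : finType) (e : rel T).

Definition total_dominating (D : {set T}) : bool :=
  [forall v, [exists u in D, e v u]].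

Definition dominating (D : {set T}) : bool :=
  [forall v, (v \notin D) ==> [exists u in D, e v u]].

(* the induced subgraph G[D] has a perfect matching: an involution p on D
   with each x in D adjacent to its partner p x *)
Definition has_perfect_matching (D : {set T}) : bool :=
  [exists p : {ffun T -> T},
     [forall x in D, [&& p x \in D, e x (p x) & p (p x) == x]]].

Definition paired_dominating (D : {set T}) : bool :=
  dominating D && has_perfect_matching D.

(* minimum sizes (default #|T| if no such set exists) *)
Definition gamma_t : nat :=
  \big[minn/#|T|]_(D : {set T} | total_dominating D) #|D|.

Definition gamma_p : nat :=
  \big[minn/#|T|]_(D : {set T} | paired_dominating D) #|D|.

End Dom.

(* Main.v *)
Require Import Defs.
From mathcomp Require Import all_boot zify.
Set Implicit Arguments. Unset Strict Implicit. Unset Printing Implicit Defensive.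

Lemma bigmin_le (I : finType) (P : pred I) (F : I -> nat) d i :
  P i -> \big[minn/d]_(j | P j) F j <= F i.
Proof.
move=> Pi; have: i \in index_enum I by rewrite mem_index_enum.
elim: (index_enum I) => [|x r IH] //=.
rewrite big_cons inE; case/orP => [/eqP<-|ir].
  by rewrite Pi geq_minl.
case: ifP => _; last exact: IH.
by rewrite geq_min IH ?orbT.
Qed.

Lemma bigmin_le_idx (I : finType) (P : pred I) (F : I -> nat) d :
  \big[minn/d]_(j | P j) F j <= d.
Proof.
rewrite unlock; elim: (index_enum I) => [|x r IH] //=.
by case: ifP => _ //; rewrite geq_min IH orbT.
Qed.

Lemma le_bigmin (I : finType) (P : pred I) (F : I -> nat) d g :
  g <= d -> (forall i, P i -> g <= F i) -> g <= \big[minn/d]_(j | P j) F j.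
Proof.
move=> gd H; elim/big_ind: _ => //.
  by move=> x y; rewrite leq_min => -> ->.
Qed.

Section General.
Variables (T T' : finType) (e : rel T) (e' : rel T') (phi : T -> T').
Hypotheses (eirr : irreflexive e) (e'irr : irreflexive e') (e'sym : symmetric e')
  (e'nb : forall v, exists u, e' v u) (phisurj : forall v, exists x, phi x = v)
  (phihom : forall x y, e x y -> phi x != phi y -> e' (phi x) (phi y)).

Lemma dom_sub (S S' : {set T'}) : S \subset S' -> dominating e' S -> dominating e' S'.
Proof.
move=> sub /forallP dS; apply/forallP => v; apply/implyP => vS'.
have /implyP := dS v.
have vS : v \notin S by apply: contra vS'; apply: (subsetP sub).
move=> /(_ vS) /existsP [u /andP [uS vu]].
by apply/existsP; exists u; rewrite (subsetP sub) // vu.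
Qed.

Lemma fixup k : forall (S U : {set T'}) (q : T' -> T'), #|U| <= k -> dominating e' S ->
  U \subset S ->
  (forall x, x \in S :\: U -> [&& q x \in S :\: U, e' x (q x) & q (q x) == x]) ->
  gamma_p e' <= #|S| + #|U|.
Proof.
elim: k => [|k IH] S U q hU dS US hq.
  have U0 : U = set0 by apply/eqP; rewrite -cards_eq0; lia.
  rewrite U0 cards0 addn0; apply: bigmin_le.
  rewrite /paired_dominating dS /=; apply/existsP; exists [ffun x => q x].
  apply/forallP => x; apply/implyP => xS; rewrite !ffunE.
  by have := hq x; rewrite U0 setD0; apply.
case: (set_0Vmem U) => [U0|[u uU]].
  by apply: (IH S U q) => //; rewrite U0 cards0.
have uS : u \in S by apply: (subsetP US).
have hU' : #|U :\ u| <= k by move: hU; rewrite (cardsD1 u U) uU; lia.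
case: (boolP [exists z, e' u z && (z \notin S)]) => [/existsP[z /andP[uz zS]] | none].
  pose q' x := if x == u then z else if x == z then u else q x.
  have zu : z != u by apply: contraNneq zS => ->.
  have := IH (z |: S) (U :\ u) q' hU'.
  have -> : #|z |: S| = #|S|.+1 by rewrite cardsU1 zS.
  have -> : #|U| = #|U :\ u|.+1 by rewrite (cardsD1 u U) uU.
  rewrite addSn -addnS; apply.
  - by apply: dom_sub dS; apply: subsetUr.
  - apply/subsetP => x; rewrite !inE => /andP[_ xU]; by rewrite (subsetP US) // orbT.
  have zU : z \notin U by apply: contra zS; apply: (subsetP US).
  have mem : forall y, (y \in (z |: S) :\: (U :\ u)) = [|| y == u, y == z | y \in S :\: U].
    move=> y; rewrite !inE; case: (eqVneq y u) => [->|yu] /=.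
      by rewrite uS orbT.
    case: (eqVneq y z) => [->|yz] /=; first by rewrite (negbTE zU).
    by [].
  move=> x; rewrite !mem /q'.
  case: (eqVneq x u) => [->|xu] /=.
    by rewrite eqxx (negbTE zu) eqxx orbT uz.
  case: (eqVneq x z) => [->|xz] /=.
    by rewrite eqxx e'sym uz eqxx.
  move=> xSU; have /and3P[] := hq x xSU.
  move=> qSU -> /eqP qq.
  have qu : q x != u by apply: contraTneq qSU => ->; rewrite inE uU.
  have qz : q x != z by apply: contraTneq qSU => ->; rewrite inE (negbTE zS) andbF.
  by rewrite (negbTE qu) (negbTE qz) qq eqxx qSU !orbT.
have := IH (S :\ u) (U :\ u) q hU'.
have -> : #|S| = #|S :\ u|.+1 by rewrite (cardsD1 u S) uS.
have -> : #|U| = #|U :\ u|.+1 by rewrite (cardsD1 u U) uU.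
move=> H; apply: leq_trans (H _ _ _) _; last by lia.
- apply/forallP => v; apply/implyP; rewrite !inE negb_and negbK => hv.
  case: (eqVneq v u) => [->|vu].
    have [z uz] := e'nb u.
    have zS : z \in S by move: none; rewrite negb_exists => /forallP /(_ z); rewrite uz /= negbK.
    apply/existsP; exists z; rewrite !inE zS uz andbT andbT.
    by apply: contraTneq uz => ->; rewrite e'irr.
  move: hv; rewrite (negbTE vu) /= => vS.
  have /forallP /(_ v) /implyP /(_ vS) /existsP [w /andP[wS vw]] := dS.
  apply/existsP; exists w; rewrite !inE wS vw andbT andbT.
  apply: contraNneq vS => wu; move: none; rewrite negb_exists => /forallP /(_ v).
  by rewrite e'sym -wu vw /= negbK.
- apply/subsetP => x; rewrite !inE => /andP[-> xU] /=; exact: (subsetP US).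
move=> x; rewrite !inE => /andP[xU' /andP[xu xS]].
have xU : x \notin U by move: xU'; rewrite xu.
have xSU : x \in S :\: U by rewrite inE xU xS.
have /and3P[] := hq x xSU.
rewrite inE => /andP[qU qS] -> ->.
have qu : q x != u by apply: contraNneq qU => ->.
by rewrite qu qS qU.
Qed.


Section Canon.
Variables (x0 : T) (D : {set T}).
Definition cc (w : T') := odflt x0 [pick x in D | phi x == w].

Lemma ccP w : w \in phi @: D -> cc w \in D /\ phi (cc w) = w.
Proof.
case/imsetP => x xD ->; rewrite /cc; case: pickP => [y /andP[yD /eqP]|/(_ x)] //=.
by rewrite xD eqxx.
Qed.

Lemma card_ccS : #|D :\: cc @: (phi @: D)| = #|D| - #|phi @: D|.
Proof.
have sub : cc @: (phi @: D) \subset D.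
  by apply/subsetP => y /imsetP[w wS ->]; case: (ccP wS).
rewrite cardsD (setIidPr sub) card_in_imset //.
move=> w1 w2 h1 h2 eq; case: (ccP h1) => _ <-; case: (ccP h2) => _ <-; by rewrite eq.
Qed.
End Canon.

Lemma card_surj : #|T'| <= #|T|.
Proof.
rewrite -cardsT -(cardsT T); apply: leq_trans (leq_imset_card phi _).
apply: subset_leq_card; apply/subsetP => v _.
by have [x <-] := phisurj v; apply: imset_f.
Qed.

Lemma total_main (x0 : T) (D : {set T}) : total_dominating e D -> gamma_t e' <= #|D|.
Proof.
move=> /forallP tD.
pose S := phi @: D.
pose c := cc x0 D.
pose bad := [set v | ~~ [exists u in S, e' v u]].
have nbS : forall y u, u \in D -> e y u -> phi u != phi y -> e' (phi y) (phi u) && (phi u \in S).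
  move=> y u uD yu ne; rewrite imset_f // andbT; apply: phihom => //; by rewrite eq_sym.
have badS : forall v, v \in bad -> v \in S.
  move=> v; rewrite inE => nb; have [y yv] := phisurj v.
  have /existsP[u /andP[uD yu]] := tD y.
  case: (eqVneq (phi u) (phi y)) => [eq|ne]; first by rewrite -yv -eq imset_f.
  have /andP[h1 h2] := nbS y u uD yu ne.
  by move: nb; rewrite negb_exists => /forallP /(_ (phi u)); rewrite h2 -yv h1.
pose g v := odflt x0 [pick u in D | e (c v) u].
have gP : forall v, v \in bad -> [/\ g v \in D, e (c v) (g v) & phi (g v) = v].
  move=> v vb; have [cD cv] := ccP x0 (badS v vb).
  have /existsP[u /andP[uD yu]] := tD (c v).
  rewrite /g; case: pickP => [u' /andP[u'D cu']|/(_ u)]; last by rewrite uD yu.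
  split => //=.
  case: (eqVneq (phi u') (phi (c v))) => [eq|ne]; first by rewrite eq.
  have /andP[h1 h2] := nbS (c v) u' u'D cu' ne.
  by move: vb; rewrite inE negb_exists => /forallP /(_ (phi u')); rewrite h2 -cv h1.
have cardbad : #|bad| <= #|D| - #|S|.
  rewrite -(card_ccS x0 D) -(@card_in_imset _ _ g).
    apply: subset_leq_card; apply/subsetP => y /imsetP[v vb ->].
    have [gD cg pg] := gP v vb.
    rewrite inE gD andbT; apply/imsetP => [[w wS gw]].
    have [_ cw] := ccP x0 wS.
    have wv : w = v by rewrite -cw -gw pg.
    by move: cg; rewrite gw wv eirr.
  move=> v1 v2 h1 h2 eq; have [_ _ <-] := gP v1 h1; have [_ _ <-] := gP v2 h2; by rewrite eq.
pose nb v := odflt v [pick u | e' v u].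
have nbP : forall v, e' v (nb v).
  move=> v; rewrite /nb; case: pickP => [//|/=]; have [u vu] := e'nb v; by move/(_ u); rewrite vu.
pose S' := S :|: nb @: bad.
apply: (@leq_trans #|S'|).
  apply: bigmin_le; apply/forallP => v; case: (boolP (v \in bad)) => vb.
    by apply/existsP; exists (nb v); rewrite nbP inE imset_f ?orbT.
  move: vb; rewrite inE negbK => /existsP[u /andP[uS vu]].
  by apply/existsP; exists u; rewrite inE uS vu.
have SD : #|S| <= #|D| by apply: leq_imset_card.
apply: leq_trans (leq_card_setU _ _) _.
have := leq_imset_card nb bad; lia.
Qed.

Lemma paired_main (x0 : T) (D : {set T}) : paired_dominating e D -> gamma_p e' <= #|D|.
Proof.
case/andP => dD /existsP[p /forallP hp].
have hp' : forall x, x \in D -> [/\ p x \in D, e x (p x) & p (p x) = x].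
  by move=> x xD; have /implyP/(_ xD)/and3P[a b /eqP c] := hp x.
pose S := phi @: D.
pose c := cc x0 D.
pose q w := phi (p (c w)).
pose good w := (q (q w) == w) && (q w != w).
pose U := [set w in S | ~~ good w].
have SD : #|S| <= #|D| by apply: leq_imset_card.
have cardU : #|U| <= #|D| - #|S|.
  rewrite -(card_ccS x0 D) -(@card_in_imset _ _ (fun w => p (c w))).
    apply: subset_leq_card; apply/subsetP => y /imsetP[w wU ->].
    move: wU; rewrite inE => /andP[wS ngood].
    have [cD cw] := ccP x0 wS.
    have [pD ep pp] := hp' _ cD.
    rewrite inE pD andbT; apply/imsetP => [[w' w'S yw']].
    have [_ cw'] := ccP x0 w'S.
    have cy : c (phi (p (c w))) = p (c w) by rewrite yw' cw'.
    move: ngood; rewrite /good /q cy pp cw eqxx /=.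
    rewrite negbK => /eqP eq.
    have : c w = p (c w) by rewrite -cy eq.
    by move=> h; move: ep; rewrite -h eirr.
  move=> w1 w2; rewrite !inE => /andP[h1 _] /andP[h2 _] eq.
  have [c1 <-] := ccP x0 h1; have [c2 <-] := ccP x0 h2.
  have [_ _ pp1] := hp' _ c1; have [_ _ pp2] := hp' _ c2.
  by rewrite -pp1 eq pp2.
apply: leq_trans (@fixup #|U| S U q (leqnn _) _ _ _) _.
- apply/forallP => v; apply/implyP => vS.
  have [y yv] := phisurj v.
  have yD : y \notin D by apply: contra vS => yD; rewrite -yv imset_f.
  have /forallP/(_ y)/implyP/(_ yD)/existsP[u /andP[uD yu]] := dD.
  apply/existsP; exists (phi u); rewrite imset_f //= -yv; apply: phihom => //.
  by apply: contraNneq vS => eq; rewrite -yv eq imset_f.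
- by apply/subsetP => w; rewrite inE => /andP[].
- move=> x; rewrite !inE => /andP[ngood xS]; move: ngood; rewrite xS /= negbK => /andP[qq qx].
  have [cD cx] := ccP x0 xS.
  have [pD ep pp] := hp' _ cD.
  have qS : q x \in S by rewrite /q imset_f.
  rewrite qS qq /= andbT /good (eqP qq) eq_refl /= eq_sym qx /=.
  rewrite andbT -{1}cx; apply: phihom => //; by rewrite cx eq_sym.
- lia.
Qed.

Lemma gamma_t_mono (x0 : T) : gamma_t e' <= gamma_t e.
Proof.
apply: le_bigmin; first exact: leq_trans (bigmin_le_idx _ _ _) card_surj.
by move=> D; apply: total_main.
Qed.

Lemma gamma_p_mono (x0 : T) : gamma_p e' <= gamma_p e.
Proof.
apply: le_bigmin; first exact: leq_trans (bigmin_le_idx _ _ _) card_surj.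
by move=> D; apply: paired_main.
Qed.

End General.

Lemma cycS N i : i < N -> i.+1 %% N = if i.+1 < N then i.+1 else 0.
Proof.
move=> iN; case: ifP => h; first by rewrite modn_small.
have -> : i.+1 = N by lia.
by rewrite modnn.
Qed.

Lemma arith (n i j : nat) : 2 <= n -> i <= n -> j <= n -> i != j ->
  (j == (i.+1 %% n.+1)) || (i == (j.+1 %% n.+1)) ->
  minn i n.-1 != minn j n.-1 ->
  (minn j n.-1 == (minn i n.-1).+1 %% n) || (minn i n.-1 == (minn j n.-1).+1 %% n).
Proof.
move=> n2 hi hj.
rewrite (@cycS n.+1 i) // (@cycS n.+1 j) //.
rewrite (@cycS n (minn i n.-1)); last lia.
rewrite (@cycS n (minn j n.-1)); last lia.
case: ifP; case: ifP; case: ifP; case: ifP; move=> *; lia.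
Qed.

Lemma cyc_irr N : irreflexive (@cycle_adj N).
Proof. by move=> i; rewrite /cycle_adj eqxx. Qed.

Lemma cyc_sym N : symmetric (@cycle_adj N).
Proof. by move=> i j; rewrite /cycle_adj eq_sym orbC. Qed.

Lemma torus_irr N M : irreflexive (torus_adj N M).
Proof. by move=> x; rewrite /torus_adj /cart_adj !cyc_irr !andbF. Qed.

Lemma torus_sym N M : symmetric (torus_adj N M).
Proof.
by move=> x y; rewrite /torus_adj /cart_adj cyc_sym [cycle_adj x.1 _]cyc_sym
  [x.1 == _]eq_sym [x.2 == _]eq_sym.
Qed.

Lemma torus_nb N M : 3 <= M -> forall v, exists u, torus_adj N M v u.
Proof.
move=> M3 [i j].
have lt : j.+1 %% M < M by rewrite ltn_pmod //; lia.
exists (i, Ordinal lt); apply/orP; left; rewrite /= eqxx /= /cycle_adj /= eqxx /= andbT.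
apply/eqP => /(congr1 val) /=; rewrite (@cycS M j) //; case: ifP; lia.
Qed.

Section Torus.
Variables (k m : nat).
Hypothesis m3 : 3 <= m.

Definition phiT (x : 'I_k.+4 * 'I_m) : 'I_k.+3 * 'I_m := (inord (minn x.1 k.+2), x.2).

Lemma phiT_surj v : exists x, phiT x = v.
Proof.
case: v => [i j]; exists (widen_ord (leqnSn _) i, j); rewrite /phiT /=.
congr pair; apply: val_inj; rewrite /= inordK; have := ltn_ord i; lia.
Qed.

Lemma phiT_hom x y : torus_adj k.+4 m x y -> phiT x != phiT y ->
  torus_adj k.+3 m (phiT x) (phiT y).
Proof.
case: x y => [i j] [i' j']; rewrite /torus_adj /cart_adj /phiT /=.
case/orP => /andP[/eqP eq h] ne.
  by rewrite eq eqxx /= h.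
apply/orP; right; rewrite eq eqxx /=.
move: ne; rewrite eq xpair_eqE eqxx andbT => ne.
have hi := ltn_ord i; have hi' := ltn_ord i'.
rewrite /cycle_adj ne /= !inordK; try lia.
move: ne; rewrite -val_eqE /= !inordK; try lia.
move: h; rewrite /cycle_adj -val_eqE /= => /andP[ii h] ne.
by apply: (@arith k.+3 i i') => //; lia.
Qed.

End Torus.

Theorem lemma5p1 (n m : nat) : 3 <= n -> 3 <= m ->
  gamma_t (torus_adj n m) <= gamma_t (torus_adj n.+1 m) /\
  gamma_p (torus_adj n m) <= gamma_p (torus_adj n.+1 m).
Proof.
case: n => [|[|[|k]]] // _ m3.
have x0 : 'I_k.+4 * 'I_m := (ord0, Ordinal (leq_trans (isT : 0 < 3) m3)).
split.
- exact: (gamma_t_mono (@torus_irr _ _) (torus_nb (N:=_) m3) (@phiT_surj k m m3) (@phiT_hom k m m3) x0).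
- exact: (gamma_p_mono (@torus_irr _ _) (@torus_irr _ _) (@torus_sym _ _) (torus_nb (N:=_) m3)
    (@phiT_surj k m m3) (@phiT_hom k m m3) x0).
Qed.
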